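(* Let $G$ be a LEF-group and let $\mathcal{C}$ be a concrete category with a terminal object and fibered products. Let $(A,a)$ be a pointed object of $\mathcal{C}$ such that $A$ is finite product Hopfian. If $\tau\in CA_{\mathcal{C}}(G,(A,a))$ is reversible, then $\tau^{-1}\in CA_{\mathcal{C}}(G,(A,a))$.
   Context: A group $G$ is LEF if every finite subset $S\subset G$ admits an injective map $\varphi\colon S\to H$ into some finite group $H$ with $\varphi(ab)=\varphi(a)\varphi(b)$ whenever $a,b,ab\in S$. A concrete category is a category with a faithful functor to sets; objects and morphisms are identified with their underlying sets and maps. In a category, an object $A$ is Hopfian if every epimorphism $A\to A$ is an automorphism, co-Hopfian if every monomorphism $A\to A$ is an automorphism; $A$ is finite product Hopfian (resp. co-Hopfian) if $A^n$ is Hopfian (resp. co-Hopfian) for all $n\in\mathbb{N}$. For finite $E$, $A^E$ is the product over the terminal object $\varepsilon$ of copies of $A$ indexed by $E$. A pointed object is $(A,a)$ with $a\colon\varepsilon\to A$; a pointed morphism $(A,a)\to(B,b)$ is $f\colon A\to B$ with $f\circ a=b$; $A^E$ is pointed by $a^E$ with all components $a$. $G$ acts on $A^G$ by $(gc)(h)=c(g^{-1}h)$; a cellular automaton is a map $\tau\colon A^G\to A^G$ with $(\tau(c))(g)=\mu((g^{-1}c)|_M)$ for some finite $M\subset G$ and map $\mu\colon A^M\to A$; it is reversible if it is bijective and its inverse is a cellular automaton. $CA_{\mathcal{C}}(G,(A,a))$ is the set of cellular automata admitting, for some finite memory set $M$, a local defining map that is the underlying map of a pointed morphism $(A^M,a^M)\to(A,a)$.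 *)

(* Defs.v *)
From mathcomp Require Import all_boot all_fingroup.
From Stdlib Require Import List.

Set Implicit Arguments.
Unset Strict Implicit.
Unset Printing Implicit Defensive.

Record Grp := MkGrp {
  gcar :> Type;
  gmul : gcar -> gcar -> gcar;
  gone : gcar;
  ginv : gcar -> gcar;
  gmulA : forall x y z, gmul x (gmul y z) = gmul (gmul x y) z;
  gmul1x : forall x, gmul gone x = x;
  gmulx1 : forall x, gmul x gone = x;
  gmulVx : forall x, gmul (ginv x) x = gone;
  gmulxV : forall x, gmul x (ginv x) = gone
}.

Definition LEF (G : Grp) : Prop :=
  forall S : list G, exists (H : finGroupType) (phi : G -> H),
    (forall x y, In x S -> In y S -> phi x = phi y -> x = y) /\
    (forall x y, In x S -> In y S -> In (gmul x y) S ->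
       phi (gmul x y) = (phi x * phi y)%g).

Record category := Category {
  Ob : Type;
  Hom : Ob -> Ob -> Type;
  idm : forall X, Hom X X;
  comp : forall X Y Z, Hom Y Z -> Hom X Y -> Hom X Z;
  compA : forall X Y Z W (h : Hom Z W) (g : Hom Y Z) (f : Hom X Y),
      comp h (comp g f) = comp (comp h g) f;
  comp_id_l : forall X Y (f : Hom X Y), comp (idm Y) f = f;
  comp_id_r : forall X Y (f : Hom X Y), comp f (idm X) = f
}.
Arguments comp {c X Y Z}.
Arguments idm {c}.

Record concrete_category := Concrete {
  cat :> category;
  U : Ob cat -> Type;
  Umap : forall X Y, Hom X Y -> U X -> U Y;
  Umap_id : forall X x, Umap (idm X) x = x;
  Umap_comp : forall X Y Z (g : Hom Y Z) (f : Hom X Y) x,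
      Umap (comp g f) x = Umap g (Umap f x);
  Umap_faithful : forall X Y (f g : Hom X Y), (forall x, Umap f x = Umap g x) -> f = g
}.
Arguments U {c}.
Arguments Umap {c X Y}.

Section CatDefs.
Variable C : category.

Definition is_terminal (T : Ob C) : Prop :=
  forall X : Ob C, exists f : Hom X T, forall g : Hom X T, g = f.

Definition has_fibered_products : Prop :=
  forall (X Y Z : Ob C) (f : Hom X Z) (g : Hom Y Z),
  exists (P : Ob C) (p1 : Hom P X) (p2 : Hom P Y),
    comp f p1 = comp g p2 /\
    forall (Q : Ob C) (q1 : Hom Q X) (q2 : Hom Q Y), comp f q1 = comp g q2 ->
      exists u : Hom Q P, (comp p1 u = q1 /\ comp p2 u = q2) /\
        forall v : Hom Q P, comp p1 v = q1 -> comp p2 v = q2 -> v = u.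

Definition is_power (A : Ob C) (E : Type) (P : Ob C) (proj : E -> Hom P A) : Prop :=
  forall (X : Ob C) (h : E -> Hom X A),
    exists u : Hom X P, (forall i, comp (proj i) u = h i) /\
      forall v : Hom X P, (forall i, comp (proj i) v = h i) -> v = u.

Definition is_epi (X Y : Ob C) (f : Hom X Y) : Prop :=
  forall (Z : Ob C) (g h : Hom Y Z), comp g f = comp h f -> g = h.
Definition is_mono (X Y : Ob C) (f : Hom X Y) : Prop :=
  forall (Z : Ob C) (g h : Hom Z X), comp f g = comp f h -> g = h.
Definition is_automorphism (X : Ob C) (f : Hom X X) : Prop :=
  exists g : Hom X X, comp g f = idm X /\ comp f g = idm X.

Definition Hopfian (A : Ob C) : Prop :=
  forall f : Hom A A, is_epi f -> is_automorphism f.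

Definition finite_product_Hopfian (A : Ob C) : Prop :=
  forall (n : nat) (P : Ob C) (proj : 'I_n -> Hom P A),
    @is_power A 'I_n P proj -> Hopfian P.
End CatDefs.
Arguments is_power {C} A {E P} proj.
Arguments is_terminal {C} T.
Arguments Hopfian {C} A.
Arguments finite_product_Hopfian {C} A.

(* Identification of the underlying set of A^E with the set of maps E -> U A:
   the forgetful functor sends finite powers to cartesian powers. *)
Definition preserves_finite_powers (C : concrete_category) : Prop :=
  forall (A : Ob C) (E : finType) (P : Ob C) (proj : E -> Hom P A),
    is_power A proj ->
    (forall x y : U P, (forall i, Umap (proj i) x = Umap (proj i) y) -> x = y) /\
    (forall h : E -> U A, exists x : U P, forall i, Umap (proj i) x = h i).

(* A finite memory set M ⊂ G is encoded by a finType E and an injection e : E -> G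
   (M = image of e); A^M is then E -> A.  Configurations are maps G -> A, and
   (g^{-1} c)(h) = c (g h). *)
Definition is_CA (G : Grp) (A : Type) (tau : (G -> A) -> (G -> A)) : Prop :=
  exists (E : finType) (e : E -> G) (mu : (E -> A) -> A),
    injective e /\
    forall c g, tau c g = mu (fun i => c (gmul g (e i))).

(* CA_C(G,(A,a)), where eps is the terminal object and a : eps -> A. *)
Definition CA_C (G : Grp) (C : concrete_category) (eps : Ob C) (A : Ob C)
    (a : Hom eps A) (tau : (G -> U A) -> (G -> U A)) : Prop :=
  exists (E : finType) (e : E -> G) (P : Ob C) (proj : E -> Hom P A) (f : Hom P A),
    [/\ injective e,
        is_power A proj,
        (* f is pointed: f o a^E = a, where a^E : eps -> A^E has all components a *)
        (forall aE : Hom eps P, (forall i, comp (proj i) aE = a) -> comp f aE = a) &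
        (* the underlying map of f is a local defining map of tau *)
        forall c g (x : U P),
          (forall i, Umap (proj i) x = c (gmul g (e i))) -> tau c g = Umap f x].

(* Main.v *)
Require Import Defs.
From mathcomp Require Import all_boot all_fingroup.
From Stdlib Require Import List FunctionalExtensionality ClassicalEpsilon.
Notation cmp := Defs.comp.
Local Set Warnings "-notation-overridden".
Set Implicit Arguments.
Unset Strict Implicit.
Unset Printing Implicit Defensive.

Lemma power_ext (C: category) (A: Ob C) (E:Type) (P : Ob C) (proj: E -> Hom P A)
  (X : Ob C) (u v : Hom X P) : is_power A proj ->
  (forall i, cmp (proj i) u = cmp (proj i) v) -> u = v.
Proof.
move=> Hp Huv. have [w [_ Hw]] := Hp X (fun i => cmp (proj i) v).
by rewrite (Hw u Huv) (Hw v (fun i => erefl)).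
Qed.

Definition pmap (C: category) (A: Ob C) (E:Type) (P : Ob C) (proj: E -> Hom P A)
  (Hp : is_power A proj) (X : Ob C) (h : E -> Hom X A) : Hom X P :=
  proj1_sig (constructive_indefinite_description _ (Hp X h)).

Lemma pmap_spec (C: category) (A: Ob C) (E:Type) (P : Ob C) (proj: E -> Hom P A)
  (Hp : is_power A proj) (X : Ob C) (h : E -> Hom X A) i :
  cmp (proj i) (pmap Hp h) = h i.
Proof.
rewrite /pmap; case: (constructive_indefinite_description _ _) => u [Hu _] /=.
exact: Hu.
Qed.

Lemma power_fin (C: category) (A: Ob C) (E: finType) (P : Ob C)
  (pn : 'I_#|E| -> Hom P A) : is_power A pn -> is_power A (fun j : E => pn (enum_rank j)).
Proof.
move=> Hp X h. have [u [Hu Huniq]] := Hp X (fun i => h (enum_val i)).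
exists u; split.
- by move=> j /=; rewrite Hu enum_rankK.
- move=> v Hv; apply: Huniq => i. by have := Hv (enum_val i); rewrite enum_valK.
Qed.

Definition snoc_proj (C: category) (A P Q : Ob C) n (pn : 'I_n -> Hom P A)
  (p1 : Hom Q P) (p2 : Hom Q A) (i : 'I_n.+1) : Hom Q A :=
  match unlift ord_max i with Some j => cmp (pn j) p1 | None => p2 end.

Lemma power_exists (C: category) (eps A : Ob C) (a : Hom eps A) :
  is_terminal eps -> has_fibered_products C ->
  forall n, exists (P : Ob C) (pn : 'I_n -> Hom P A), is_power A pn.
Proof.
move=> Hterm Hpb; elim=> [|n [P [pn Hp]]].
  exists eps, (fun _ => a) => X h.
  have [t Ht] := Hterm X. exists t; split; last by move=> v _; apply: Ht.
  by move=> [m Hm]; exfalso; move: Hm; rewrite ltn0.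
have [bP _] := Hterm P. have [bA _] := Hterm A.
have [Q [p1 [p2 [Hsq Huniv]]]] := Hpb P A eps bP bA.
exists Q, (snoc_proj pn p1 p2) => X h.
have [u1 [Hu1 Hu1u]] := Hp X (fun j => h (lift ord_max j)).
have compat : cmp bP u1 = cmp bA (h ord_max).
  by have [tX HtX] := Hterm X; rewrite (HtX (cmp bP u1)) (HtX (cmp bA _)).
have [u [[Hu1' Hu2'] Huu]] := Huniv X u1 (h ord_max) compat.
exists u; split.
- move=> i; rewrite /snoc_proj; case: unliftP => [j -> | ->] //.
  by rewrite -Defs.compA Hu1' Hu1.
- move=> v Hv; apply: Huu.
  + apply: Hu1u => j; rewrite Defs.compA.
    by have := Hv (lift ord_max j); rewrite /snoc_proj liftK.
  + by have := Hv ord_max; rewrite /snoc_proj unlift_none.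
Qed.

Lemma In_enum (T: finType) (x:T) : List.In x (enum T).
Proof.
have: x \in enum T by rewrite mem_enum.
elim: (enum T) => //= y s IH; rewrite inE => /orP[/eqP->|/IH]; [left|right] => //.
Qed.

Theorem theorem6p1 (G : Grp) (C : concrete_category) (eps : Ob C) (A : Ob C)
    (a : Hom eps A) (tau sigma : (G -> U A) -> (G -> U A)) :
  LEF G ->
  is_terminal eps ->
  has_fibered_products C ->
  preserves_finite_powers C ->
  finite_product_Hopfian A ->
  CA_C a tau ->
  (* tau is reversible: bijective with inverse sigma, and sigma is a cellular automaton *)
  (forall c, sigma (tau c) = c) ->
  (forall c, tau (sigma c) = c) ->
  is_CA sigma ->
  CA_C a sigma.
Proof.
move=> HLEF Hterm Hpb Hpres Hhopf [E [e [P [proj [f [einj powP ptd loc]]]]]]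
  sig_tau tau_sig [E' [e' [nu [e'inj locs]]]].
pose S := gone G :: List.app (List.map e (enum E)) (List.app (List.map e' (enum E'))
   (List.flat_map (fun i => List.map (fun j => gmul (e i) (e' j)) (enum E')) (enum E))).
have [H [phi [phinj phimul]]] := HLEF S.
have InS1 : List.In (gone G) S by left.
have InSe : forall i, List.In (e i) S.
  by move=> i; right; apply/in_or_app; left; apply/in_map/In_enum.
have InSe' : forall j, List.In (e' j) S.
  by move=> j; right; apply/in_or_app; right; apply/in_or_app; left; apply/in_map/In_enum.
have InSee : forall i j, List.In (gmul (e i) (e' j)) S.
  move=> i j; right; apply/in_or_app; right; apply/in_or_app; right.
  apply/in_flat_map; exists i; split; [exact: In_enum | apply/in_map/In_enum].
have phi1 : phi (gone G) = 1%g.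
  have h := phimul _ _ InS1 InS1 (ltac:(rewrite gmul1x; exact InS1)).
  move: h; rewrite gmul1x => h.
  apply: (@mulgI _ (phi (gone G))); by rewrite mulg1 -h.
have phiee : forall i j, phi (gmul (e i) (e' j)) = (phi (e i) * phi (e' j))%g.
  by move=> i j; apply: phimul.
have phie'inj : forall j k, phi (e' j) = phi (e' k) -> j = k.
  by move=> j k /(phinj _ _ (InSe' j) (InSe' k)); apply: e'inj.
have [Pn [pn powPn]] := power_exists a Hterm Hpb #|H|.
pose projH := fun h : H => pn (enum_rank h).
have powH : is_power A projH := power_fin powPn.
have [detH exH] := Hpres A H Pn projH powH.
have [Pm [pm powPm]] := power_exists a Hterm Hpb #|E'|.
pose projE' := fun j : E' => pm (enum_rank j).
have powE' : is_power A projE' := power_fin powPm.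
pose R := fun h : H => pmap powP (fun k => projH (h * phi (e k))%g).
pose T := pmap powH (fun h => cmp f (R h)).
have HT : forall x h, Umap (projH h) (Umap T x) = Umap f (Umap (R h) x).
  by move=> x h; rewrite -Umap_comp pmap_spec Umap_comp.
have HR : forall x h k, Umap (proj k) (Umap (R h) x) = Umap (projH (h * phi (e k))%g) x.
  by move=> x h k; rewrite -Umap_comp pmap_spec.
pose sigH := fun y h => nu (fun j => Umap (projH (h * phi (e' j))%g) y).
have surj : forall y, exists z, Umap T z = y /\ forall h, Umap (projH h) z = sigH y h.
  move=> y; have [z Hz] := exH (fun h => sigH y h).
  exists z; split => //; apply: detH => h; rewrite HT.
  pose c := fun g : G => Umap (projH (h * phi g)%g) y.
  have Hc := congr1 (fun d => d (gone G)) (tau_sig c); rewrite /= in Hc.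
  have Hx : forall i, Umap (proj i) (Umap (R h) z) = sigma c (gmul (gone G) (e i)).
    move=> k; rewrite HR Hz /sigH locs gmul1x.
    congr nu; apply: functional_extensionality => j.
    by rewrite /c phiee mulgA.
  by rewrite -(loc _ _ _ Hx) Hc /c phi1 mulg1.
have Tepi : is_epi T.
  move=> Z g k Hgk; apply: Umap_faithful => y.
  have [z [Hz _]] := surj y.
  by rewrite -Hz -!Umap_comp Hgk.
have [t' [Ht'T HTt']] := Hhopf #|H| Pn pn powPn T Tepi.
have Ut' : forall y h, Umap (projH h) (Umap t' y) = sigH y h.
  move=> y h; have [z [Hz Hz2]] := surj y.
  by rewrite -{1}Hz -[Umap t' (Umap T z)]Umap_comp Ht'T Umap_id Hz2.
pose bang := fun X => proj1_sig (constructive_indefinite_description _ (Hterm X)).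
have Hbang : forall X g, g = bang X.
  by move=> X; rewrite /bang; case: (constructive_indefinite_description _ _).
pose r := pmap powH (fun h : H => match [pick j | phi (e' j) == h] with
     Some j => projE' j | None => cmp a (bang Pm) end).
pose f'' := cmp (projH 1%g) (cmp t' r).
exists E', e', Pm, projE', f''; split => //.
- move=> aE HaE.
  pose aH := cmp r aE.
  have HaH : forall h, cmp (projH h) aH = a.
    move=> h; rewrite /aH Defs.compA pmap_spec; case: pickP => [j _|_].
      exact: HaE.
    rewrite -Defs.compA (Hbang eps (cmp (bang Pm) aE)) -(Hbang eps (Defs.idm eps)).
    exact: comp_id_r.
  have HTaH : cmp T aH = aH.
    apply: (power_ext powH) => h.
    rewrite HaH Defs.compA pmap_spec -Defs.compA.
    apply: ptd => k; rewrite Defs.compA pmap_spec; exact: HaH.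
  have Ht'aH : cmp t' aH = aH.
    by rewrite -{1}HTaH Defs.compA Ht'T comp_id_l.
  have -> : cmp f'' aE = cmp (projH 1%g) (cmp t' aH) by rewrite /aH /f'' !Defs.compA.
  by rewrite Ht'aH HaH.
- move=> c g x Hx.
  rewrite locs /f'' !Umap_comp Ut' /sigH.
  congr nu; apply: functional_extensionality => j.
  rewrite mul1g -Umap_comp pmap_spec.
  case: pickP => [k /eqP Hk | Hn]; last by have := Hn j; rewrite eqxx.
  by rewrite (phie'inj _ _ Hk) Hx.
Qed.
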